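(* Let $\mathbf V$ be a variety of $\mathscr J$-trivial monoids. Then $A_0^1\notin\mathbf V$ if and only if $\mathbf V$ is a variety of aperiodic monoids with commuting idempotents (i.e., in every monoid of $\mathbf V$ all subgroups are trivial and any two idempotents commute).
   Context: A monoid $S$ is $\mathscr J$-trivial if $SaS=SbS$ implies $a=b$. $A_0=\langle e,f\mid e^2=e,\ f^2=f,\ fe=0\rangle=\{e,f,ef,0\}$ and $A_0^1$ is $A_0$ with a new identity element adjoined. *)

(* Defs.v *)
From Stdlib Require Import List.
Import ListNotations.

Record monoid : Type := Monoid {
  carrier :> Type;
  mmul : carrier -> carrier -> carrier;
  mone : carrier;
  mmulA : forall x y z, mmul x (mmul y z) = mmul (mmul x y) z;
  mmul1l : forall x, mmul mone x = x;
  mmulr1 : forall x, mmul x mone = x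
}.
Arguments mmul {m}.
Arguments mone {m}.

Definition word := list nat.

Fixpoint eval_word (M : monoid) (s : nat -> M) (w : word) : M :=
  match w with
  | [] => mone
  | i :: w' => mmul (s i) (eval_word M s w')
  end.

Definition satisfies (M : monoid) (u v : word) : Prop :=
  forall s : nat -> M, eval_word M s u = eval_word M s v.

(* A variety of monoids is the class of all models of a set Sigma of
   identities (Birkhoff); [in_variety Sigma M] means M belongs to it. *)
Definition in_variety (Sigma : word -> word -> Prop) (M : monoid) : Prop :=
  forall u v, Sigma u v -> satisfies M u v.

(* J-trivial: S a S = S b S implies a = b. *)
Definition J_trivial (M : monoid) : Prop :=
  forall a b : M,
    (forall z : M, (exists x y, z = mmul (mmul x a) y) <->
                   (exists x y, z = mmul (mmul x b) y)) ->
    a = b.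

(* G (a subset of M) is a subgroup of M: closed under the multiplication and
   a group for it (with its own identity element e, an idempotent of M). *)
Definition is_subgroup (M : monoid) (G : M -> Prop) : Prop :=
  (forall x y, G x -> G y -> G (mmul x y)) /\
  exists e, G e /\
    (forall g, G g -> mmul e g = g /\ mmul g e = g) /\
    (forall g, G g -> exists h, G h /\ mmul g h = e /\ mmul h g = e).

Definition aperiodic (M : monoid) : Prop :=
  forall G : M -> Prop, is_subgroup M G -> forall g h, G g -> G h -> g = h.

Definition commuting_idempotents (M : monoid) : Prop :=
  forall e f : M, mmul e e = e -> mmul f f = f -> mmul e f = mmul f e.

(* A_0^1 = {1, e, f, ef, 0} with e^2 = e, f^2 = f, fe = 0. *)
Inductive A01_t : Type := A1 | Ae | Af | Aef | A0.

Definition A01_mul (x y : A01_t) : A01_t :=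
  match x, y with
  | A1, y => y
  | x, A1 => x
  | A0, _ => A0
  | _, A0 => A0
  | Ae, Ae => Ae
  | Ae, Af => Aef
  | Ae, Aef => Aef
  | Af, Ae => A0
  | Af, Af => Af
  | Af, Aef => A0
  | Aef, Ae => A0
  | Aef, Af => Aef
  | Aef, Aef => A0
  end.

Lemma A01_mulA : forall x y z, A01_mul x (A01_mul y z) = A01_mul (A01_mul x y) z.
Proof. intros [] [] []; reflexivity. Qed.
Lemma A01_mul1l : forall x, A01_mul A1 x = x.
Proof. intros []; reflexivity. Qed.
Lemma A01_mulr1 : forall x, A01_mul x A1 = x.
Proof. intros []; reflexivity. Qed.

Definition A01 : monoid := Monoid A01_t A01_mul A1 A01_mulA A01_mul1l A01_mulr1.

(* Main.v *)
Require Import Defs.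
From Stdlib Require Import List Classical.
Import ListNotations.

Ltac nrm := repeat rewrite <- mmulA; repeat rewrite mmul1l; repeat rewrite mmulr1.

Definition inI (M : monoid) (p z : M) : Prop :=
  exists x y, z = mmul (mmul x p) y.

Lemma inI_mul (M : monoid) (p m a b : M) : inI M p m -> inI M p (mmul (mmul a m) b).
Proof.
  intros [x [y ->]]. exists (mmul a x), (mmul y b). nrm. reflexivity.
Qed.

Lemma J_le (M : monoid) (a b : M) :
  J_trivial M -> inI M b a -> inI M a b -> a = b.
Proof.
  intros HJ Hab Hba. apply HJ. intro z. split.
  - intros H. destruct Hab as [x [y Ey]]. destruct H as [x' [y' Ez]].
    exists (mmul x' x), (mmul y y'). rewrite Ez, Ey. nrm. reflexivity.
  - intros H. destruct Hba as [x [y Ey]]. destruct H as [x' [y' Ez]].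
    exists (mmul x' x), (mmul y y'). rewrite Ez, Ey. nrm. reflexivity.
Qed.

Lemma Jtriv_aperiodic (M : monoid) : J_trivial M -> aperiodic M.
Proof.
  intros HJ G [Hcl [e [He [Hid Hinv]]]] g h Hg Hh.
  assert (Hge : forall g, G g -> g = e).
  { intros k Hk. destruct (Hid k Hk) as [H1 H2]. destruct (Hinv k Hk) as [k' [Hk' [E1 E2]]].
    apply J_le; auto.
    - exists mone, k. nrm. symmetry; exact H1.
    - exists mone, k'. nrm. symmetry; exact E1. }
  rewrite (Hge g Hg), (Hge h Hh). reflexivity.
Qed.

Section Embed.
Variable M : monoid.
Variables e f : M.
Hypothesis He : mmul e e = e.
Hypothesis Hf : mmul f f = f.
Hypothesis Hnot : ~ inI M (mmul f e) (mmul e f).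

Let I := inI M (mmul f e).

Definition lift (a : A01_t) : M :=
  match a with A1 => mone | Ae => e | Af => f | Aef => mmul e f | A0 => mmul f e end.

Definition R (m : M) (a : A01_t) : Prop :=
  match a with A1 => m = mone | Ae => m = e | Af => m = f | Aef => m = mmul e f
  | A0 => I m end.

Lemma R_lift a : R (lift a) a.
Proof. destruct a; simpl; try reflexivity. exists mone, mone. nrm. reflexivity. Qed.

Lemma I_r m b : I m -> I (mmul m b).
Proof. intro H. rewrite <- (mmul1l M m). now apply inI_mul. Qed.
Lemma I_l m a : I m -> I (mmul a m).
Proof. intro H. rewrite <- (mmulr1 M (mmul a m)). now apply inI_mul. Qed.

Lemma R_mul m n a b : R m a -> R n b -> R (mmul m n) (A01_mul a b).
Proof.
  destruct a, b; simpl; intros Hm Hn;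
  try (apply I_r; assumption); try (apply I_l; assumption);
  try subst m; try subst n; nrm; try reflexivity; try assumption.
  - rewrite mmulA, He. reflexivity.
  - exists mone, mone. nrm. reflexivity.
  - exists mone, f. nrm. reflexivity.
  - exists e, mone. nrm. reflexivity.
  - rewrite Hf. reflexivity.
  - exists e, f. nrm. reflexivity.
Qed.

Lemma nI_e : ~ I e.
Proof. intro H. apply Hnot. apply I_r. exact H. Qed.
Lemma nI_f : ~ I f.
Proof. intro H. apply Hnot. apply I_l. exact H. Qed.
Lemma nI_1 : ~ I mone.
Proof. intro H. apply nI_e. rewrite <- (mmul1l M e). apply I_r. exact H. Qed.

Lemma ne_e1 : e <> mone.
Proof. intro E. apply Hnot. rewrite E. exists mone, mone. nrm. reflexivity. Qed.
Lemma ne_f1 : f <> mone.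
Proof. intro E. apply Hnot. rewrite E. exists mone, mone. nrm. reflexivity. Qed.
Lemma ne_ef1 : mmul e f <> mone.
Proof. intro E. apply ne_e1. transitivity (mmul e (mmul e f)). { rewrite E, mmulr1. reflexivity. } rewrite mmulA, He. exact E. Qed.
Lemma ne_ef : e <> f.
Proof. intro E. apply Hnot. rewrite E. exists mone, mone. nrm. reflexivity. Qed.
Lemma ne_eef : e <> mmul e f.
Proof.
  intro E. apply nI_e. exists e, mone. nrm.
  rewrite mmulA, <- E, He. reflexivity.
Qed.
Lemma ne_fef : f <> mmul e f.
Proof.
  intro E. apply nI_f. exists f, f. nrm.
  rewrite <- E, !Hf. reflexivity.
Qed.

Lemma R_fun m a b : R m a -> R m b -> a = b.
Proof.
  pose proof nI_e. pose proof nI_f. pose proof nI_1.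
  pose proof ne_e1. pose proof ne_f1. pose proof ne_ef1. pose proof ne_ef.
  pose proof ne_eef. pose proof ne_fef.
  destruct a, b; simpl; intros Ha Hb; try reflexivity; exfalso;
  try (subst m; contradiction); try congruence.
Qed.

Lemma R_eval (s : nat -> A01) w :
  R (eval_word M (fun i => lift (s i)) w) (eval_word A01 s w).
Proof.
  induction w as [|i w IH]; simpl.
  - reflexivity.
  - apply (R_mul _ _ _ _ (R_lift (s i)) IH).
Qed.

Lemma embed Sigma : in_variety Sigma M -> in_variety Sigma A01.
Proof.
  intros HV u v Huv s.
  apply (R_fun (eval_word M (fun i => lift (s i)) u)).
  - apply R_eval.
  - rewrite (HV u v Huv). apply R_eval.
Qed.
End Embed.

Theorem fact6p4 (Sigma : word -> word -> Prop) :
  (forall M : monoid, in_variety Sigma M -> J_trivial M) ->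
  (~ in_variety Sigma A01 <->
   forall M : monoid, in_variety Sigma M ->
     aperiodic M /\ commuting_idempotents M).
Proof.
  intros HJ. split.
  - intros HA M HM. split.
    + apply Jtriv_aperiodic, HJ, HM.
    + intros e f He Hf. apply NNPP. intro Hne.
      destruct (classic (inI M (mmul f e) (mmul e f))) as [H1|H1].
      * destruct (classic (inI M (mmul e f) (mmul f e))) as [H2|H2].
        -- apply Hne. apply J_le; auto.
        -- apply HA. apply (embed M f e Hf He H2 Sigma HM).
      * apply HA. apply (embed M e f He Hf H1 Sigma HM).
  - intros H HA. destruct (H A01 HA) as [_ Hc].
    specialize (Hc Ae Af eq_refl eq_refl). discriminate Hc.
Qed.
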